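(* Let $G=(V,E)$ be a graph and let $R$ be $E_{\mathbb{K}}[\mathrm{HSTAB}(G)]$ (resp. $E_{\mathbb{K}}[\mathrm{QSTAB}(G)]$, resp. $E_{\mathbb{K}}[\mathrm{TSTAB}(G)]$). If there are maximal cliques (resp. maximal cliques, resp. maximal elements of $\mathcal K(G)$) $K_1,K_2$ with $\#K_1>\#K_2$, then $\operatorname{tr}(\omega_R)\subseteq R_{\ge \#K_1-\#K_2}=\bigoplus_{n\ge\#K_1-\#K_2}R_n$.
   Context: $\mathrm{HSTAB}(G)$ is the set of $f\in\mathbb{R}^V$ with $0\le f(x)\le 1$ for all $x$, $\sum_{x\in K}f(x)\le1$ for every clique $K$, and $\sum_{x\in C}f(x)\le(\#C-1)/2$ for every odd cycle $C$; $\mathrm{QSTAB}(G)$ uses only the first two conditions; $\mathrm{TSTAB}(G)$ uses the first and third conditions and $\sum_{x\in e}f(x)\le1$ for every edge $e$. $\mathcal K(G)$ is the set of cliques of $G$ of size at most $3$. For a rational polytope $\mathcal P\subset\mathbb{R}^V$, with $V^-=V\cup\{-\infty\}$, $T^f=\prod_{x\in V^-}T_x^{f(x)}$, $\deg T_x=0$ ($x\in V$), $\deg T_{-\infty}=1$, the Ehrhart ring over a field $\mathbb{K}$ is $E_{\mathbb{K}}[\mathcal P]=\mathbb{K}[T^f\mid f\in\mathbb{Z}^{V^-}, f(-\infty)>0, f|_V/f(-\infty)\in\mathcal P]$; it is a normal Cohen–Macaulay graded domain with canonical module $\omega_R$. $\operatorname{tr}(M)=\sum_{\varphi\in\operatorname{Hom}_R(M,R)}\varphi(M)$.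 *)

(* Defs.v *)
(* graphs on 'I_n, Ehrhart rings as subsets of the
   polynomial ring {mpoly Kf[n.+1]} (variable ord_max = T_{-oo}). *)
From HB Require Import structures.
From mathcomp Require Import all_boot all_order all_algebra.
From mathcomp Require Import mpoly.
From Stdlib Require List.
Set Implicit Arguments. Unset Strict Implicit. Unset Printing Implicit Defensive.
Import Order.TTheory GRing.Theory Num.Theory.
Local Open Scope ring_scope.

Inductive stab_kind := HSTAB | QSTAB | TSTAB.

Definition is_clique n (e : rel 'I_n) (K : {set 'I_n}) : bool :=
  [forall x in K, forall y in K, (x != y) ==> e x y].

Definition maximal_clique n (e : rel 'I_n) (K : {set 'I_n}) : bool :=
  is_clique e K &&
  [forall K' : {set 'I_n}, (is_clique e K' && (K \subset K')) ==> (K' == K)].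

(* maximal element of calK(G) = cliques of size at most 3 *)
Definition maximal_K3 n (e : rel 'I_n) (K : {set 'I_n}) : bool :=
  [&& is_clique e K, (#|K| <= 3)%N &
  [forall K' : {set 'I_n},
     [&& is_clique e K', (#|K'| <= 3)%N & K \subset K'] ==> (K' == K)]].

Definition is_odd_cycle n (e : rel 'I_n) (s : seq 'I_n) : bool :=
  [&& uniq s, (3 <= size s)%N, odd (size s) & cycle e s].

(* vertex x of V as a coordinate of V^- = 'I_n.+1 ; ord_max is -oo *)
Definition vtx n (x : 'I_n) : 'I_n.+1 := widen_ord (leqnSn n) x.

(* integer points g of the cone over P (homogenised with t = g(-oo)):
   g(-oo) >= 0 and g|_V / g(-oo) in P *)
Definition in_cone n (e : rel 'I_n) (k : stab_kind) (g : 'I_n.+1 -> int) : Prop :=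
  let t := g ord_max in
  let f := fun x : 'I_n => g (vtx x) in
  [/\ 0 <= t,
      (forall x, 0 <= f x /\ f x <= t),
      (k <> TSTAB -> forall K, is_clique e K -> \sum_(x in K) f x <= t),
      (k = TSTAB -> forall x y, e x y -> f x + f y <= t) &
      (k <> QSTAB -> forall s, is_odd_cycle e s ->
          2 * \sum_(x <- s) f x <= ((size s).-1)%:Z * t)].

(* (topological) interior of that (full dimensional) cone, for lattice points:
   some positive multiple N g has all N g +- e_j in the cone *)
Definition in_interior n (e : rel 'I_n) (k : stab_kind) (g : 'I_n.+1 -> int) : Prop :=
  exists N : nat, (0 < N)%N /\ forall j : 'I_n.+1,
    in_cone e k (fun i => N%:Z * g i + (if i == j then 1 else 0)) /\
    in_cone e k (fun i => N%:Z * g i - (if i == j then 1 else 0)).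

Definition expo n (m : 'X_{1..n.+1}) : 'I_n.+1 -> int := fun i => (m i)%:Z.

Section Ring.
Variables (Kf : fieldType) (n : nat) (e : rel 'I_n) (k : stab_kind).

(* the Ehrhart ring R = E_K[P] : K-span of the T^f, f in the cone *)
Definition in_R (p : {mpoly Kf[n.+1]}) : Prop :=
  forall m, m \in msupp p -> in_cone e k (expo m).

Definition in_R_ge (d : nat) (p : {mpoly Kf[n.+1]}) : Prop :=
  in_R p /\ forall m, m \in msupp p -> (d <= m ord_max)%N.

(* canonical module omega_R (Danilov--Stanley): span of interior monomials *)
Definition in_omega (p : {mpoly Kf[n.+1]}) : Prop :=
  forall m, m \in msupp p -> in_interior e k (expo m).

Definition is_hom_omega (phi : {mpoly Kf[n.+1]} -> {mpoly Kf[n.+1]}) : Prop :=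
  [/\ (forall x, in_omega x -> in_R (phi x)),
      (forall x y, in_omega x -> in_omega y -> phi (x + y) = phi x + phi y) &
      (forall r x, in_R r -> in_omega x -> phi (r * x) = r * phi x)].

Definition in_trace_omega (p : {mpoly Kf[n.+1]}) : Prop :=
  exists s : seq (({mpoly Kf[n.+1]} -> {mpoly Kf[n.+1]}) * {mpoly Kf[n.+1]}),
    (forall q, List.In q s -> is_hom_omega q.1 /\ in_omega q.2) /\
    p = \sum_(q <- s) q.1 q.2.

End Ring.

(* Main.v *)
Require Import Defs.
From HB Require Import structures.
From mathcomp Require Import all_boot all_order all_algebra.
From mathcomp Require Import mpoly.
From mathcomp Require Import zify.
From Stdlib Require Import FunctionalExtensionality.
Import Order.TTheory GRing.Theory Num.Theory.
Local Open Scope ring_scope.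
Set Implicit Arguments. Unset Strict Implicit. Unset Printing Implicit Defensive.



Lemma vtx_neq_max n (x : 'I_n) : (vtx x == ord_max) = false.
Proof. by apply/negbTE; rewrite -val_eqE /= neq_ltn ltn_ord. Qed.

Lemma vtx_inj n : injective (@vtx n).
Proof. by move=> x y /(congr1 val) /= /val_inj. Qed.

Lemma vtx_or_max n (j : 'I_n.+1) : j = ord_max \/ exists x : 'I_n, j = vtx x.
Proof.
case: (ltnP j n) => h.
  by right; exists (Ordinal h); apply/val_inj.
by left; apply/val_inj => /=; have := ltn_ord j; lia.
Qed.

Lemma big_Posz (I : Type) (r : seq I) (P : pred I) (F : I -> nat) :
  \sum_(i <- r | P i) (F i)%:Z = (\sum_(i <- r | P i) F i)%N%:Z.
Proof. by rewrite (big_morph Posz PoszD (erefl _)). Qed.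

Lemma cliqueP n (e : rel 'I_n) (K : {set 'I_n}) x y :
  is_clique e K -> x \in K -> y \in K -> x != y -> e x y.
Proof.
move=> /forall_inP H hx hy nxy; move: (H x hx) => /forall_inP /(_ y hy) /implyP.
by apply.
Qed.

Lemma clique_intro n (e : rel 'I_n) (K : {set 'I_n}) :
  (forall x y, x \in K -> y \in K -> x != y -> e x y) -> is_clique e K.
Proof.
move=> H; apply/forall_inP => x hx; apply/forall_inP => y hy; apply/implyP.
exact: H.
Qed.

Lemma cone_clique n (e : rel 'I_n) (e_sym : forall x y, e x y = e y x) k g K :
  in_cone e k g -> is_clique e K -> (k = TSTAB -> (#|K| <= 3)%N) ->
  \sum_(x in K) g (vtx x) <= g ord_max.
Proof.
case=> h0 h1 h2 h3 h4 hK hs.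
case: k h2 h3 h4 hs => h2 h3 h4 hs; try exact: h2.
have := hs erefl; rewrite -big_enum cardE.
have hu := enum_uniq (mem K).
have hm : forall x, (x \in enum K) = (x \in K) by move=> x; rewrite mem_enum.
move: hu hm; case: (enum K) => [|x [|y [|z [|w s]]]] //= hu hm _.
- by rewrite big_nil.
- by rewrite big_cons big_nil addr0; case: (h1 x).
- rewrite !big_cons big_nil addr0; apply: h3 => //.
  apply: (cliqueP hK); rewrite -?hm ?inE ?eqxx ?orbT //.
  by move: hu; rewrite inE andbT.
- have hc : is_odd_cycle e [:: x; y; z].
    apply/and4P; split => //.
    move: hu; rewrite !inE negb_or => /and3P [/andP [nxy nxz] nyz _].
    have hx : x \in K by rewrite -hm inE eqxx.
    have hy : y \in K by rewrite -hm !inE eqxx orbT.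
    have hz : z \in K by rewrite -hm !inE eqxx !orbT.
    rewrite /= (cliqueP hK hx hy nxy) (cliqueP hK hy hz nyz) /=.
    by rewrite e_sym (cliqueP hK hx hz nxz).
  have := h4 (fun H => ltac:(discriminate)) _ hc; rewrite /= !big_cons big_nil addr0.
  move=> H; lia.
Qed.



Definition strict n (e : rel 'I_n) (k : stab_kind) (g : 'I_n.+1 -> int) : Prop :=
  let t := g ord_max in
  let f := fun x : 'I_n => g (vtx x) in
  [/\ 1 <= t, (forall x, 1 <= f x /\ f x + 1 <= t),
      (k <> TSTAB -> forall K, is_clique e K -> \sum_(x in K) f x + 1 <= t),
      (k = TSTAB -> forall x y, e x y -> f x + f y + 1 <= t) &
      (k <> QSTAB -> forall s, is_odd_cycle e s ->
          2 * \sum_(x <- s) f x <= ((size s).-1)%:Z * (t - 1))].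

Lemma sum_ind_le1 n (x0 : 'I_n) (c : int) (r : seq 'I_n) :
  c <= 1 -> uniq r ->
  \sum_(x <- r) c * (if vtx x == vtx x0 then 1 else 0) <= 1.
Proof.
move=> hc; elim: r => [|x r IH] /=; first by rewrite big_nil.
move=> /andP [hx hu]; rewrite big_cons.
case: eqP => [/vtx_inj exx | _]; last by rewrite mulr0 add0r IH.
rewrite mulr1 big_seq big1 ?addr0 // => y hy.
case: eqP => [/vtx_inj eyx | _]; last by rewrite mulr0.
by move: hx; rewrite exx -eyx hy.
Qed.

Lemma cone_pert n (e : rel 'I_n) (e_irr : irreflexive e) k g (c : int) j :
  strict e k g -> (c = 1 \/ c = -1) ->
  in_cone e k (fun i => g i + c * (if i == j then 1 else 0)).
Proof.
case=> s0 s1 s2 s3 s4 hc.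
have hc1 : c <= 1 by case: hc => ->.
have hc2 : -1 <= c by case: hc => ->.
case: (vtx_or_max j) => [-> | [x0 ->]].
- rewrite /in_cone /= eqxx mulr1.
  have z : forall x : 'I_n, (if vtx x == ord_max then 1 else 0) = 0 :> int.
    by move=> x; rewrite vtx_neq_max.
  split.
  + lia.
  + move=> x; rewrite z mulr0 addr0; case: (s1 x); lia.
  + move=> hk K hK; have := s2 hk K hK.
    under eq_bigr do rewrite z mulr0 addr0.
    set S := (X in X <= _ + c) => H.
    have {H} : S + 1 <= g ord_max by exact: H.
    lia.
  + move=> hk x y hxy; have := s3 hk x y hxy; rewrite !z !mulr0 !addr0; lia.
  + move=> hk s hs; have := s4 hk s hs.
    under eq_bigr do rewrite z mulr0 addr0.
    move: hs => /and4P [_ hL _ _].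
    have hL' : (2 <= (size s).-1)%N by case: (size s) hL => //.
    set S := \sum_(x <- s) _; set L := (size s).-1.
    move: hL'; rewrite -/L => hL'.
    have : (2 <= L%:Z) by rewrite lez_nat.
    move=> hL2 H.
    have : L%:Z * (g ord_max - 1) <= L%:Z * (g ord_max + c).
      by apply: ler_wpM2l; lia.
    lia.
- have zt : (ord_max == vtx x0) = false by rewrite eq_sym vtx_neq_max.
  rewrite /in_cone /= zt mulr0 addr0.
  have hs : forall r, uniq r ->
      \sum_(x <- r) (g (vtx x) + c * (if vtx x == vtx x0 then 1 else 0))
        <= \sum_(x <- r) g (vtx x) + 1.
    by move=> r hr; rewrite big_split /= lerD2l; exact: sum_ind_le1.
  split.
  + lia.
  + move=> x; case: (s1 x); case: (vtx x == vtx x0); lia.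
  + move=> hk K hK; rewrite -big_enum.
    apply: le_trans (hs _ (enum_uniq (mem K))) _; rewrite big_enum; exact: s2.
  + move=> hk x y hxy; have := s3 hk x y hxy.
    have hxy' : uniq [:: x; y].
      rewrite /= inE andbT; apply/eqP => exy; move: hxy; rewrite exy.
      by rewrite e_irr.
    have := hs _ hxy'; rewrite !big_cons !big_nil !addr0; exact: le_trans.
  + move=> hk s hs'; have := s4 hk s hs'.
    move: (hs') => /and4P [hu hL _ _].
    have := hs _ hu.
    have hL' : (2 <= (size s).-1)%N by case: (size s) hL => //.
    set S := \sum_(x <- s) g _; set S' := \sum_(x <- s) _; set L := (size s).-1.
    move: hL'; rewrite -/L => hL'.
    have : (2 <= L%:Z) by rewrite lez_nat.
    move=> hL2 H1 H2.
    have E : L%:Z * (g ord_max - 1) = L%:Z * g ord_max - L%:Z by rewrite mulrBr mulr1.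
    lia.
Qed.

Lemma strict_interior n (e : rel 'I_n) (e_irr : irreflexive e) k g :
  strict e k g -> in_interior e k g.
Proof.
move=> hs; exists 1%N; split => // j; split.
- have -> : (fun i => 1%:Z * g i + (if i == j then 1 else 0)) =
            (fun i => g i + 1 * (if i == j then 1 else 0)).
    by apply: functional_extensionality => i; rewrite !mul1r.
  by apply: cone_pert => //; left.
- have -> : (fun i => 1%:Z * g i - (if i == j then 1 else 0)) =
            (fun i => g i + (-1) * (if i == j then 1 else 0)).
    by apply: functional_extensionality => i; rewrite mul1r mulN1r.
  by apply: cone_pert => //; right.
Qed.



Definition maxc n (e : rel 'I_n) (k : stab_kind) (K : {set 'I_n}) : Prop :=
  [/\ is_clique e K, (k = TSTAB -> (#|K| <= 3)%N) &
      forall K', is_clique e K' -> (k = TSTAB -> (#|K'| <= 3)%N) ->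
                 K \subset K' -> K' = K].

Lemma maxc_of n (e : rel 'I_n) k K :
  (if k is TSTAB then maximal_K3 e K else maximal_clique e K) -> maxc e k K.
Proof.
case: k => /=.
- case/andP => hc /forallP H; split => // K' hK' _ hs.
  by apply/eqP; move/implyP: (H K'); apply; rewrite hK' hs.
- case/andP => hc /forallP H; split => // K' hK' _ hs.
  by apply/eqP; move/implyP: (H K'); apply; rewrite hK' hs.
- case/and3P => hc h3 /forallP H; split => // K' hK' h3' hs.
  by apply/eqP; move/implyP: (H K'); apply; rewrite hK' hs h3'.
Qed.

Lemma clique_set1 n (e : rel 'I_n) (e_irr : irreflexive e) x : is_clique e [set x].
Proof.
by apply: clique_intro => a b; rewrite !inE => /eqP -> /eqP ->; rewrite eqxx.
Qed.

Lemma clique_set2 n (e : rel 'I_n) (e_sym : forall x y, e x y = e y x) x y :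
  e x y -> is_clique e [set x; y].
Proof.
move=> hxy; apply: clique_intro => a b; rewrite !inE.
by case/orP => /eqP -> /orP [] /eqP ->; rewrite ?eqxx // e_sym.
Qed.

Lemma maxc_pos n (e : rel 'I_n) (e_irr : irreflexive e) k K (x : 'I_n) :
  maxc e k K -> (0 < #|K|)%N.
Proof.
case=> _ _ H; rewrite lt0n; apply/negP => /eqP /cards0_eq hK.
have h1 : k = TSTAB -> (#|[set x]| <= 3)%N by rewrite cards1.
have := H [set x] (clique_set1 e_irr x) h1.
rewrite hK sub0set => /(_ isT) /setP /(_ x); by rewrite !inE eqxx.
Qed.

Definition bvec n (K2 : {set 'I_n}) (M : nat) (i : 'I_n.+1) : nat :=
  if i == ord_max then (M * #|K2|).+1
  else if [exists x in K2, vtx x == i] then M else 1%N.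

Lemma bvec_vtx n (K2 : {set 'I_n}) M x :
  bvec K2 M (vtx x) = if x \in K2 then M else 1%N.
Proof.
rewrite /bvec vtx_neq_max.
have -> : [exists y in K2, vtx y == vtx x] = (x \in K2) => //.
apply/existsP/idP => [[y /andP [hy /eqP /vtx_inj <-]] //| hx].
by exists x; rewrite hx eqxx.
Qed.

Lemma bvec_max n (K2 : {set 'I_n}) M : bvec K2 M ord_max = (M * #|K2|).+1.
Proof. by rewrite /bvec eqxx. Qed.

Lemma clique_bound n (e : rel 'I_n) k K2 K :
  maxc e k K2 -> is_clique e K -> (k = TSTAB -> (#|K| <= 3)%N) ->
  (\sum_(x in K) bvec K2 (2 * n + 4) (vtx x) <= (2 * n + 4) * #|K2|)%N.
Proof.
set M := (2 * n + 4)%N.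
move=> [hc2 h32 H] hK h3.
under eq_bigr do rewrite bvec_vtx.
case: (boolP (K \subset K2)) => hs.
  rewrite (eq_bigr (fun _ => M)); last by move=> x hx; rewrite (subsetP hs x hx).
  rewrite sum_nat_const mulnC leq_mul2l (subset_leq_card hs) orbT //.
have nK : ~~ (K2 \subset K).
  apply/negP => hs'; have := H K hK h3 hs' => eK; by move: hs; rewrite eK subxx.
rewrite (@big_setID _ _ _ _ K K2) /=.
rewrite (eq_bigr (fun _ => M)); last by move=> x; rewrite inE => /andP [_ ->].
rewrite [X in (_ + X)%N](eq_bigr (fun _ => 1%N)); last first.
  by move=> x; rewrite inE => /andP [/negbTE -> _].
rewrite !sum_nat_const.
have hp : K :&: K2 \proper K2.
  rewrite properEneq subsetIr andbT; apply/negP => /eqP eI.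
  by move: nK; rewrite -eI subsetIl.
have := proper_card hp.
have : (#|K :\: K2| <= n)%N by have := max_card (mem (K :\: K2)); rewrite card_ord.
rewrite /M; move: (#|K :\: K2|) (#|K :&: K2|) (#|K2|) => a b c ha hb; nia.
Qed.

Lemma sum_bvec_seq n (K2 : {set 'I_n}) M (s : seq 'I_n) :
  (\sum_(x <- s) (if x \in K2 then M else 1) =
   M * count (mem K2) s + count (predC (mem K2)) s)%N.
Proof.
elim: s => [|x s IH]; first by rewrite big_nil muln0.
rewrite big_cons IH /=; case: (x \in K2) => /=; lia.
Qed.

Lemma triangle_clique n (e : rel 'I_n) (e_sym : forall x y, e x y = e y x) s :
  uniq s -> size s = 3%N -> cycle e s -> is_clique e [set w | w \in s].
Proof.
case: s => [|x [|y [|z [|]]]] //.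
move=> _ _ /= /and4P [exy eyz ezx _].
apply: clique_intro => a b; rewrite !inE.
move=> /or3P [] /eqP -> /or3P [] /eqP ->; rewrite ?eqxx // => _;
  by rewrite ?exy ?eyz ?ezx // e_sym ?exy ?eyz ?ezx.
Qed.

Lemma odd_b n (e : rel 'I_n) (e_sym : forall x y, e x y = e y x)
  (e_irr : irreflexive e) k K2 s :
  maxc e k K2 -> is_odd_cycle e s ->
  (2 * \sum_(x <- s) bvec K2 (2 * n + 4) (vtx x) <=
     (size s).-1 * ((2 * n + 4) * #|K2|))%N.
Proof.
move=> hm; have [hc h3 H] := hm; move=> /and4P [hu hL hodd hcyc].
under eq_bigr do rewrite bvec_vtx.
rewrite sum_bvec_seq.
have hcL := count_predC (mem K2) s.
have hck : (count (mem K2) s <= #|K2|)%N.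
  rewrite -size_filter cardE; apply: uniq_leq_size; first exact: filter_uniq.
  by move=> y; rewrite mem_filter mem_enum => /andP [].
have hLn : (size s <= n)%N.
  by rewrite -(card_uniqP hu); have := max_card (mem s); rewrite card_ord.
have k2pos : (0 < #|K2|)%N.
  by case: s hu hL {hodd hcyc hcL hck hLn} => [|x s] // _ _; exact: (@maxc_pos n e e_irr k K2 x hm).
set c := count (mem K2) s in hcL hck *.
set d := count (predC (mem K2)) s in hcL *.
case: (leqP (2 * c + 1) ((size s).-1 * #|K2|)) => hA.
  move: hA hcL hck hLn hL.
  move: c d (size s) #|K2| => c d L k2.
  move=> hA hcL hck hLn hL.
  have hL1 : L = (L.-1).+1 by case: L hL {hA hcL hLn}.
  move: hA hcL hLn hL; rewrite hL1; move: (L.-1) => L' /=.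
  move=> hA hcL hLn hL; nia.
have hL3 : ((size s).-1 <= 2)%N.
  rewrite -(leq_pmul2r k2pos); move: hA hck; move: ((size s).-1 * #|K2|)%N => P.
  lia.
have hcK : c = #|K2|.
  apply/eqP; rewrite eqn_leq hck /=.
  have : (2 * #|K2| <= (size s).-1 * #|K2|)%N.
    by rewrite leq_mul2r; apply/orP; right; case: (size s) hL => // [] [|[|]].
  move: ((size s).-1 * #|K2|)%N hA => P hA H2.
  move: hA; rewrite addn1 ltnS => hA; rewrite -(leq_pmul2l (_ : 0 < 2)%N) //; exact: leq_trans H2 hA.
have hsz : size s = 3%N.
  by case: (size s) hL hL3 hodd => // [] [|[|[|[|]]]].
have hsub : K2 \subset [set w | w \in s].
  have hs1 : {subset filter (mem K2) s <= enum K2}.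
    by move=> y; rewrite mem_filter mem_enum => /andP [].
  have hs2 : (size (enum K2) <= size (filter (mem K2) s))%N.
    by rewrite size_filter -/c hcK cardE.
  have [_ heq] := uniq_min_size (filter_uniq (mem K2) hu) hs1 hs2.
  apply/subsetP => w hw; rewrite inE.
  have : w \in filter (mem K2) s by rewrite heq mem_enum.
  by rewrite mem_filter => /andP [].
have hcl := triangle_clique e_sym hu hsz hcyc.
have hcard : #|[set w | w \in s]| = 3%N.
  by rewrite cardsE (card_uniqP hu) hsz.
have eS := H _ hcl (fun _ => ltac:(by rewrite hcard)) hsub.
have hk3 : #|K2| = 3%N by rewrite -eS hcard.
move: hcL; rewrite hcK hk3 hsz => hcL.
have -> : d = 0%N by lia.
lia.
Qed.

Lemma strict_b n (e : rel 'I_n) (e_sym : forall x y, e x y = e y x)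
  (e_irr : irreflexive e) k K2 :
  maxc e k K2 -> strict e k (fun i => (bvec K2 (2 * n + 4) i)%:Z).
Proof.
move=> hm; rewrite /strict /= bvec_max.
have hge : forall x, (1 <= bvec K2 (2 * n + 4) (vtx x))%N.
  by move=> x; rewrite bvec_vtx; case: ifP => _; lia.
split.
- lia.
- move=> x; have h1 : k = TSTAB -> (#|[set x]| <= 3)%N by rewrite cards1.
  have := clique_bound hm (clique_set1 e_irr x) h1; rewrite big_set1.
  have := hge x; lia.
- move=> hk K hK; rewrite big_Posz.
  have h3 : k = TSTAB -> (#|K| <= 3)%N by move=> /hk.
  by rewrite -PoszD lez_nat addn1 ltnS; exact: clique_bound hm hK h3.
- move=> hk x y hxy.
  have nxy : x != y by apply/eqP => exy; move: hxy; rewrite exy e_irr.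
  have h2 : k = TSTAB -> (#|[set x; y]| <= 3)%N by rewrite cards2 nxy.
  have := clique_bound hm (clique_set2 e_sym hxy) h2.
  rewrite big_setU1 ?inE // big_set1 => H; by rewrite -!PoszD lez_nat addn1 ltnS.
- move=> hk s hs; have := odd_b e_sym e_irr hm hs; rewrite big_Posz.
  move: (\sum_(i <- s) _)%N ((2 * n + 4) * #|K2|)%N ((size s).-1) => S P L.
  nia.
Qed.

Definition bvec' n (i : 'I_n.+1) : nat := if i == ord_max then (n + 4)%N else 1%N.

Lemma strict_b' n (e : rel 'I_n) k :
  strict e k (fun i => (bvec' i)%:Z).
Proof.
rewrite /strict /bvec' /= eqxx.
have z : forall x : 'I_n, (vtx x == ord_max) = false by move=> x; rewrite vtx_neq_max.
split.
- lia.
- by move=> x; rewrite z; lia.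
- move=> hk K hK; under eq_bigr do rewrite z.
  rewrite big_Posz sum_nat_const.
  have := max_card (mem K); rewrite card_ord => h; rewrite -PoszD lez_nat muln1.
  by apply: leq_trans (leq_add h (leqnn 1)) _; lia.
- by move=> hk x y _; rewrite !z; lia.
- move=> hk s /and4P [hu hL _ _]; under eq_bigr do rewrite z.
  rewrite (big_Posz _ _ (fun _ => 1%N)) sum1_size.
  have : (3 <= size s)%N := hL.
  move: (size s) => L hL3.
  have -> : (L.-1)%:Z = L%:Z - 1 by lia.
  nia.
Qed.



Lemma interior_minus n (e : rel 'I_n) k g :
  in_interior e k g -> exists N : nat, (0 < N)%N /\
    in_cone e k (fun i => N%:Z * g i - (if i == ord_max then 1 else 0)).
Proof. by case=> N [hN H]; exists N; split => //; case: (H ord_max). Qed.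

Lemma interior_cone n (e : rel 'I_n) k g :
  in_interior e k g -> in_cone e k g.
Proof.
case/interior_minus => N [hN [h0 h1 h2 h3 h4]].
rewrite eqxx in h0 h1 h2 h3 h4.
have z : forall x : 'I_n, (if vtx x == ord_max then 1 else 0) = 0 :> int.
  by move=> x; rewrite vtx_neq_max.
have hNz : (0 < N%:Z) by rewrite ltz_nat.
have dv : forall a b : int, N%:Z * a <= N%:Z * b - 1 -> a <= b.
  by move=> a b H; rewrite -(ler_pM2l hNz); lia.
split.
- by apply: (dv 0); rewrite mulr0; lia.
- move=> x; have := h1 x; rewrite z subr0 => -[ha hb]; split.
  + by rewrite -(ler_pM2l hNz) mulr0.
  + exact: dv.
- move=> hk K hK; have := h2 hk K hK.
  under eq_bigr do rewrite z subr0.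
  rewrite -mulr_sumr; exact: dv.
- move=> hk x y hxy; have := h3 hk x y hxy; rewrite !z !subr0 -mulrDr; exact: dv.
- move=> hk s hs; have := h4 hk s hs.
  under eq_bigr do rewrite z subr0.
  rewrite -mulr_sumr => H.
  rewrite -(ler_pM2l hNz); apply: le_trans (_ : _ <= (size s).-1%:Z * (N%:Z * g ord_max - 1)) _.
    by move: H; rewrite mulrCA.
  rewrite mulrCA; apply: ler_wpM2l => //; lia.
Qed.

Lemma interior_facts n (e : rel 'I_n) (e_sym : forall x y, e x y = e y x) k
  (a : 'X_{1..n.+1}) K :
  in_interior e k (expo a) -> is_clique e K -> (k = TSTAB -> (#|K| <= 3)%N) ->
  (forall x, 1 <= a (vtx x))%N /\ (\sum_(x in K) a (vtx x) + 1 <= a ord_max)%N.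
Proof.
move=> hI hK h3; split.
- move=> x; case: hI => N [hN H]; case: (H (vtx x)) => _ [_ h1 _ _ _].
  have := (h1 x).1; rewrite eqxx /expo.
  move: (a (vtx x)) => A; nia.
- case/interior_minus: hI => N [hN hc].
  have := cone_clique e_sym hc hK h3 => /=.
  rewrite eqxx; under eq_bigr do rewrite vtx_neq_max subr0.
  rewrite -mulr_sumr /expo big_Posz.
  move: (\sum_(i in K) a (vtx i))%N (a ord_max) => S T; nia.
Qed.



Lemma inR_X (Kf : fieldType) n (e : rel 'I_n) k (a : 'X_{1..n.+1}) :
  in_interior e k (expo a) -> in_R e k ('X_[a] : {mpoly Kf[n.+1]}).
Proof. by move=> h m; rewrite msuppX inE => /eqP ->; exact: interior_cone. Qed.

Lemma inO_X (Kf : fieldType) n (e : rel 'I_n) k (a : 'X_{1..n.+1}) :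
  in_interior e k (expo a) -> in_omega e k ('X_[a] : {mpoly Kf[n.+1]}).
Proof. by move=> h m; rewrite msuppX inE => /eqP ->. Qed.

Lemma shift_exists (Kf : fieldType) n (e : rel 'I_n) k (phi : {mpoly Kf[n.+1]} -> {mpoly Kf[n.+1]})
  (a b m : 'X_{1..n.+1}) :
  is_hom_omega e k phi ->
  in_interior e k (expo a) -> in_interior e k (expo b) ->
  m \in msupp (phi 'X_[a]) ->
  exists2 m', m' \in msupp (phi 'X_[b]) & (b + m = a + m')%MM.
Proof.
move=> [hR hD hM] ha hb hm.
have E : phi 'X_[b] * 'X_[a] = phi 'X_[a] * 'X_[b].
  rewrite [LHS]mulrC -(hM _ _ (@inR_X Kf _ _ _ _ ha) (@inO_X Kf _ _ _ _ hb)).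
  by rewrite [X in phi X]mulrC (hM _ _ (@inR_X Kf _ _ _ _ hb) (@inO_X Kf _ _ _ _ ha)) mulrC.
have : (b + m)%MM \in msupp (phi 'X_[a] * 'X_[b]).
  by rewrite (perm_mem (msuppMX _ _)); apply: map_f.
by rewrite -E (perm_mem (msuppMX _ _)) => /mapP [m' hm' ->]; exists m'.
Qed.

Definition bm n (K2 : {set 'I_n}) : 'X_{1..n.+1} :=
  [multinom bvec K2 (2 * n + 4) i | i < n.+1].
Definition bm' n : 'X_{1..n.+1} := [multinom bvec' i | i < n.+1].

Lemma mono_deg (Kf : fieldType) n (e : rel 'I_n)
  (e_sym : forall x y, e x y = e y x) (e_irr : irreflexive e) k K1 K2
  (phi : {mpoly Kf[n.+1]} -> {mpoly Kf[n.+1]})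
  (a m : 'X_{1..n.+1}) :
  maxc e k K1 -> maxc e k K2 -> is_hom_omega e k phi ->
  in_interior e k (expo a) -> m \in msupp (phi 'X_[a]) ->
  (#|K1| - #|K2| <= m ord_max)%N.
Proof.
move=> hm1 hm2 hphi Ia hm.
have [hc1 h31 _] := hm1; have [hc2 h32 _] := hm2.
have Ib : in_interior e k (expo (bm K2)).
  have -> : expo (bm K2) = fun i => (bvec K2 (2 * n + 4) i)%:Z.
    by apply: functional_extensionality => i; rewrite /expo mnmE.
  apply: strict_interior => //; exact: strict_b.
have Ib' : in_interior e k (expo (bm' n)).
  have -> : expo (bm' n) = fun i => (bvec' i)%:Z.
    by apply: functional_extensionality => i; rewrite /expo mnmE.
  apply: strict_interior => //; exact: strict_b'.
have [m2 hm2' eq2] := shift_exists hphi Ia Ib hm.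
have [m3 hm3' eq3] := shift_exists hphi Ia Ib' hm.
have c2 : in_cone e k (expo m2) by case: hphi => hR _ _; exact: hR _ (@inO_X Kf _ _ _ _ Ib) _ hm2'.
have S2 := cone_clique e_sym c2 hc2 h32.
rewrite /expo big_Posz lez_nat in S2.
have [ha1 ha2] := interior_facts e_sym Ia hc1 h31.
have e2 : forall i, (bvec K2 (2 * n + 4) i + m i = a i + m2 i)%N.
  by move=> i; have := congr1 (fun mm : 'X_{1..n.+1} => mm i) eq2; rewrite /= !mnmDE mnmE.
have e3 : forall i, (bvec' i + m i = a i + m3 i)%N.
  by move=> i; have := congr1 (fun mm : 'X_{1..n.+1} => mm i) eq3; rewrite /= !mnmDE mnmE.
have lb : forall x, x \in K2 -> (2 * n + 4 - 1 <= m2 (vtx x))%N.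
  move=> x hx; have := e2 (vtx x); have := e3 (vtx x).
  rewrite bvec_vtx hx /bvec' vtx_neq_max; lia.
have L2 : (\sum_(x in K2) (2 * n + 4 - 1) <= \sum_(x in K2) m2 (vtx x))%N.
  exact: leq_sum.
rewrite sum_nat_const in L2.
have L1 : (\sum_(x in K1) 1 <= \sum_(x in K1) a (vtx x))%N.
  exact: leq_sum.
rewrite sum_nat_const in L1.
have eM := e2 ord_max; rewrite bvec_max in eM.
move: L1 L2 S2 ha2 eM.
move: (\sum_(x in K1) a (vtx x))%N (\sum_(x in K2) m2 (vtx x))%N => SA SM.
move: #|K1| #|K2| => k1 k2.
nia.
Qed.



Lemma msupp_zero (Kf : fieldType) n m : (m \in msupp (0 : {mpoly Kf[n]})) = false.
Proof. by rewrite mcoeff_msupp raddf0 eqxx. Qed.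

Lemma cone0 n (e : rel 'I_n) k : in_cone e k (fun _ => 0).
Proof.
split => //.
- by move=> _ K _; rewrite big1.
- by move=> _ s _; rewrite big1 // mulr0 mulr0.
Qed.

Lemma inR_C (Kf : fieldType) n (e : rel 'I_n) k (c : Kf) :
  in_R e k (c%:MP : {mpoly Kf[n.+1]}).
Proof.
move=> m; rewrite msuppC; case: eqP => // _; rewrite inE => /eqP ->.
have -> : expo (0%MM : 'X_{1..n.+1}) = fun _ => 0.
  by apply: functional_extensionality => i; rewrite /expo mnm0E.
exact: cone0.
Qed.

Lemma inO_D (Kf : fieldType) n (e : rel 'I_n) k (p q : {mpoly Kf[n.+1]}) :
  in_omega e k p -> in_omega e k q -> in_omega e k (p + q).
Proof. by move=> hp hq m /msuppD_le; rewrite mem_cat => /orP [/hp | /hq]. Qed.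

Lemma inR_D (Kf : fieldType) n (e : rel 'I_n) k (p q : {mpoly Kf[n.+1]}) :
  in_R e k p -> in_R e k q -> in_R e k (p + q).
Proof. by move=> hp hq m /msuppD_le; rewrite mem_cat => /orP [/hp | /hq]. Qed.

Lemma inO_sum (Kf : fieldType) n (e : rel 'I_n) k (r : seq 'X_{1..n.+1}) (c : 'X_{1..n.+1} -> Kf) :
  (forall m, m \in r -> in_interior e k (expo m)) ->
  in_omega e k (\sum_(m <- r) c m *: ('X_[m] : {mpoly Kf[n.+1]})).
Proof.
elim: r => [|m r IH] H; first by rewrite big_nil => m; rewrite msupp_zero.
rewrite big_cons; apply: inO_D; last by apply: IH => m' hm'; apply: H; rewrite inE hm' orbT.
move=> m' /msuppZ_le; rewrite msuppX inE => /eqP ->; apply: H; by rewrite inE eqxx.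
Qed.

Definition Pd (Kf : fieldType) n (d : nat) (q : {mpoly Kf[n.+1]}) : Prop :=
  forall m, m \in msupp q -> (d <= m ord_max)%N.

Lemma Pd_D (Kf : fieldType) n d (p q : {mpoly Kf[n.+1]}) : Pd d p -> Pd d q -> Pd d (p + q).
Proof. by move=> hp hq m /msuppD_le; rewrite mem_cat => /orP [/hp | /hq]. Qed.

Lemma phi_Pd (Kf : fieldType) n (e : rel 'I_n) k d
  (phi : {mpoly Kf[n.+1]} -> {mpoly Kf[n.+1]}) (x : {mpoly Kf[n.+1]}) :
  is_hom_omega e k phi -> in_omega e k x ->
  (forall a, in_interior e k (expo a) -> Pd d (phi 'X_[a])) ->
  Pd d (phi x).
Proof.
move=> [hR hD hM] hx HX; rewrite (mpolyE x).
have : forall m, m \in msupp x -> in_interior e k (expo m) by [].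
elim: (msupp x) => [|m r IH] H.
  rewrite big_nil.
  have h0 : in_omega e k (0 : {mpoly Kf[n.+1]}) by move=> m; rewrite msupp_zero.
  have E := hD _ _ h0 h0; rewrite addr0 in E.
  have -> : phi 0 = 0 by apply: (addrI (phi 0)); rewrite addr0 -E.
  by move=> m; rewrite msupp_zero.
have Hr : forall m', m' \in r -> in_interior e k (expo m').
  by move=> m' hm'; apply: H; rewrite inE hm' orbT.
have Hm : in_interior e k (expo m) by apply: H; rewrite inE eqxx.
rewrite big_cons hD; last exact: inO_sum.
- apply: Pd_D; last exact: IH.
  rewrite -mul_mpolyC hM; last exact: inO_X; last exact: inR_C.
  by rewrite mul_mpolyC => m' /msuppZ_le /(HX _ Hm).
- by move=> m' /msuppZ_le; rewrite msuppX inE => /eqP ->.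
Qed.

Unset Implicit Arguments.

Theorem lemma4p1 (Kf : fieldType) (n : nat) (e : rel 'I_n)
  (e_sym : forall x y, e x y = e y x) (e_irr : irreflexive e) (k : stab_kind)
  (K1 K2 : {set 'I_n}) :
  (if k is TSTAB then maximal_K3 e K1 && maximal_K3 e K2
   else maximal_clique e K1 && maximal_clique e K2) ->
  (#|K2| < #|K1|)%N ->
  forall p : {mpoly Kf[n.+1]}, in_trace_omega e k p ->
    in_R_ge e k (#|K1| - #|K2|) p.
Proof.
move=> hmax hlt p [s [hs ->]].
have [hm1 hm2] : maxc e k K1 /\ maxc e k K2.
  by move: hmax; clear; case: k => /andP [h1 h2]; split; apply: maxc_of; [exact: h1 | exact: h2 | exact: h1 | exact: h2 | exact: h1 | exact: h2].
elim: s hs => [|q s IH] hs.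
  by rewrite big_nil; split => m; rewrite msupp_zero.
rewrite big_cons.
have [hq1 hq2] := hs q (or_introl erefl).
have [IH1 IH2] := IH (fun q' h => hs q' (or_intror h)).
split.
- apply: inR_D => //; case: hq1 => hR _ _; exact: hR.
- move=> m /msuppD_le; rewrite mem_cat => /orP [hm | /IH2 //].
  apply: (phi_Pd hq1 hq2 _ hm) => a ha m' hm'.
  exact: (@mono_deg Kf n e e_sym e_irr k K1 K2 q.1 a m' hm1 hm2 hq1 ha hm').
Qed.
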